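(* Let $|\psi\rangle$ be a pure three-qubit state. If $\mathcal C_{ij}^2>\frac49$ holds for two distinct pairs $\{i,j\}\subset\{A,B,C\}$, then steering is non-monogamous for $|\psi\rangle$: the corresponding two reduced states both satisfy $S_{ij}>1$, i.e. both violate the three-settings CJWR linear steering inequality.
   Context: For a two-qubit state $\rho$ let $t_{kl}=\mathrm{Tr}[\rho\,\sigma_k\otimes\sigma_l]$ ($\sigma_k$ Pauli matrices) and $S(\rho)=\sum_{k,l=1}^3 t_{kl}^2$; $\rho_{ij}$ is the reduced state of qubits $i,j$ and $S_{ij}=S(\rho_{ij})$. The three-settings CJWR linear steering inequality has maximal value $\sqrt{S(\rho)}$ over settings, so it is violated iff $S(\rho)>1$. $\mathcal C_{ij}$ is the Wootters concurrence of $\rho_{ij}$: $\mathcal C(\rho)=\max\{0,\lambda_1-\lambda_2-\lambda_3-\lambda_4\}$, with $\lambda_1\ge\dots\ge\lambda_4$ the square roots of the eigenvalues of $\rho(\sigma_2\otimes\sigma_2)\rho^*(\sigma_2\otimes\sigma_2)$. *)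

(* Defs.v *)
From HB Require Import structures.
From mathcomp Require Import all_boot all_order all_algebra.
From mathcomp Require Import complex mxtens.
Set Implicit Arguments. Unset Strict Implicit. Unset Printing Implicit Defensive.
Import Order.TTheory GRing.Theory Num.Theory.
Local Open Scope ring_scope.
Local Open Scope complex_scope.

Section Defs.
Variable R : rcfType.
Local Notation C := R[i].

(* Pauli matrices sigma_1, sigma_2, sigma_3, indexed by k : 'I_3 (k = 0,1,2). *)
Definition pauli (k : 'I_3) : 'M[C]_2 :=
  \matrix_(a < 2, b < 2)
    if val k == 0%N then (if val a == val b then 0 else 1)
    else if val k == 1%N then
      (if val a == val b then 0 else if val a == 0%N then - 'i else 'i)
    else (if val a == val b then (if val a == 0%N then 1 else -1) else 0).

(* A three-qubit pure state: amplitudes psi a b c = <a b c|psi>. *)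
Definition qstate3 := 'I_2 -> 'I_2 -> 'I_2 -> C.

Definition normalized (psi : qstate3) : Prop :=
  \sum_(a < 2) \sum_(b < 2) \sum_(c < 2) psi a b c * (psi a b c)^* = 1.

Definition amp (psi : qstate3) (k : 'I_3) (z x y : 'I_2) : C :=
  if val k == 0%N then psi z x y
  else if val k == 1%N then psi x z y
  else psi x y z.

(* Two-qubit reduced state of psi obtained by tracing out qubit k
   (k = 0: rho_BC, k = 1: rho_AC, k = 2: rho_AB), as a 4x4 matrix in the
   product basis |x y>, index mxtens_index (x, y). *)
Definition reduced (psi : qstate3) (k : 'I_3) : 'M[C]_(2 * 2) :=
  \matrix_(i, j)
    \sum_(z < 2) amp psi k z (mxtens_unindex i).1 (mxtens_unindex i).2
                 * (amp psi k z (mxtens_unindex j).1 (mxtens_unindex j).2)^*.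

Definition corr (rho : 'M[C]_(2 * 2)) (k l : 'I_3) : C :=
  \tr (rho *m (pauli k *t pauli l)).

Definition Ssum (rho : 'M[C]_(2 * 2)) : C :=
  \sum_(k < 3) \sum_(l < 3) corr rho k l ^+ 2.

Definition wootters_mx (rho : 'M[C]_(2 * 2)) : 'M[C]_(2 * 2) :=
  let Y := pauli 1 *t pauli 1 in rho *m Y *m map_mx conjc rho *m Y.

(* c is the Wootters concurrence of rho: lam 0 >= lam 1 >= lam 2 >= lam 3 >= 0
   are the square roots of the eigenvalues (with multiplicity, i.e. the
   roots of the characteristic polynomial) of wootters_mx rho, and
   c = max(0, lam0 - lam1 - lam2 - lam3). *)
Definition is_concurrence (rho : 'M[C]_(2 * 2)) (c : R) : Prop :=
  exists lam : 'I_4 -> R,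
    (forall i, 0 <= lam i) /\
    (forall i j : 'I_4, (i <= j)%N -> lam j <= lam i) /\
    char_poly (wootters_mx rho) = \prod_(i < 4) ('X - ((lam i ^+ 2)%:C)%:P) /\
    c = Num.max 0 (lam 0 - lam 1 - lam 2 - lam 3).

End Defs.

(* Main.v *)
Require Import Defs.
From HB Require Import structures.
From mathcomp Require Import all_boot all_order all_algebra.
From mathcomp Require Import complex mxtens.
From mathcomp Require Import ring lra.
Import Order.TTheory GRing.Theory Num.Theory.
Local Open Scope ring_scope.
Local Open Scope complex_scope.

Module Helpers.
Set Implicit Arguments. Unset Strict Implicit. Unset Printing Implicit Defensive.
Local Close Scope complex_scope.
Local Notation "x %:C" := (real_complex _ x) (format "x %:C") : ring_scope.


Section S.
Variable R : rcfType.
Local Notation C := R[i].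

Definition o0 : 'I_(2*2) := @Ordinal (2*2) 0 isT.
Definition o1 : 'I_(2*2) := @Ordinal (2*2) 1 isT.
Definition o2 : 'I_(2*2) := @Ordinal (2*2) 2 isT.
Definition o3 : 'I_(2*2) := @Ordinal (2*2) 3 isT.
Definition t0 : 'I_2 := @Ordinal 2 0 isT.
Definition t1 : 'I_2 := @Ordinal 2 1 isT.
Definition k0 : 'I_3 := @Ordinal 3 0 isT.
Definition k1 : 'I_3 := @Ordinal 3 1 isT.
Definition k2 : 'I_3 := @Ordinal 3 2 isT.

Lemma sum4 (F : 'I_(2*2) -> C) : \sum_i F i = F o0 + F o1 + F o2 + F o3.
Proof.
rewrite (@big_ord_recr _ _ _ 3) (@big_ord_recr _ _ _ 2) (@big_ord_recr _ _ _ 1) (@big_ord_recr _ _ _ 0) big_ord0 /= add0r.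
by congr (_ + _ + _ + _); congr F; apply: val_inj.
Qed.

Lemma sum2 (F : 'I_2 -> C) : \sum_i F i = F t0 + F t1.
Proof.
rewrite (@big_ord_recr _ _ _ 1) (@big_ord_recr _ _ _ 0) big_ord0 /= add0r.
by congr (_ + _); congr F; apply: val_inj.
Qed.

Lemma sum3 (F : 'I_3 -> C) : \sum_i F i = F k0 + F k1 + F k2.
Proof.
rewrite (@big_ord_recr _ _ _ 2) (@big_ord_recr _ _ _ 1) (@big_ord_recr _ _ _ 0) big_ord0 /= add0r.
by congr (_ + _ + _); congr F; apply: val_inj.
Qed.

Lemma unI0 : mxtens_unindex o0 = (t0, t0). Proof. by congr pair; apply: val_inj. Qed.
Lemma unI1 : mxtens_unindex o1 = (t0, t1). Proof. by congr pair; apply: val_inj. Qed.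
Lemma unI2 : mxtens_unindex o2 = (t1, t0). Proof. by congr pair; apply: val_inj. Qed.
Lemma unI3 : mxtens_unindex o3 = (t1, t1). Proof. by congr pair; apply: val_inj. Qed.

Lemma tensE (A B : 'M[C]_2) i j :
  (A *t B) i j = A (mxtens_unindex i).1 (mxtens_unindex j).1 * B (mxtens_unindex i).2 (mxtens_unindex j).2.
Proof. by rewrite mxE. Qed.

Definition ii : C := 'i%C.
Lemma ii2 : ii * ii = -1. Proof. by rewrite /ii -expr2 sqr_i. Qed.

Definition pv (k a b : nat) : C :=
  match k, a, b with
  | 0, 0, 1 => 1 | 0, 1, 0 => 1
  | 1, 0, 1 => - ii | 1, 1, 0 => ii
  | 2, 0, 0 => 1 | 2, 1, 1 => -1
  | _, _, _ => 0 end.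

Lemma pauliE k a b : pauli R k a b = pv k a b.
Proof.
case: k => [[|[|[|k]]] hk] //; case: a => [[|[|a]] ha] //; case: b => [[|[|b]] hb] //;
  by rewrite mxE.
Qed.

Lemma corrE (r : 'M[C]_(2*2)) k l : corr r k l =
  \sum_(i < 2*2) \sum_(j < 2*2) r i j * (pv k (mxtens_unindex j).1 (mxtens_unindex i).1 * pv l (mxtens_unindex j).2 (mxtens_unindex i).2).
Proof.
rewrite /corr /mxtrace; apply: eq_bigr => i _; rewrite mxE; apply: eq_bigr => j _.
by rewrite tensE !pauliE.
Qed.

Definition Ym : 'M[C]_(2*2) := locked (pauli R k1 *t pauli R k1).

Lemma YmE i j : Ym i j = pv 1 (mxtens_unindex i).1 (mxtens_unindex j).1 * pv 1 (mxtens_unindex i).2 (mxtens_unindex j).2.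
Proof. by rewrite /Ym -lock tensE !pauliE. Qed.

Lemma Ssum_id (r : 'M[C]_(2*2)) :
  Ssum r = 2 * \tr (r *m r) + 2 * \tr (r *m Ym *m r^T *m Ym) - (\tr r)^+2.
Proof.
rewrite /Ssum !sum3 !expr2 !corrE.
rewrite /mxtrace.
Time rewrite !sum4 !mxE !sum4 !mxE !sum4 !mxE !sum4 !YmE !unI0 !unI1 !unI2 !unI3; cbn [fst snd nat_of_ord t0 t1 k0 k1 k2 pv].
Time ring: ii2.
Qed.
End S.


Section N2.
Variable R : rcfType.
Local Notation C := R[i].

Lemma rcD (x y : R) : (x + y)%:C = x%:C + y%:C :> C. Proof. exact: rmorphD. Qed.
Lemma rcB (x y : R) : (x - y)%:C = x%:C - y%:C :> C. Proof. exact: rmorphB. Qed.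
Lemma rcN (x : R) : (- x)%:C = - x%:C :> C. Proof. exact: rmorphN. Qed.
Lemma rcM (x y : R) : (x * y)%:C = x%:C * y%:C :> C. Proof. exact: rmorphM. Qed.
Lemma rcX (x : R) n : (x ^+ n)%:C = x%:C ^+ n :> C. Proof. exact: rmorphXn. Qed.
Lemma rc1 : (1 : R)%:C = 1 :> C. Proof. exact: rmorph1. Qed.
Lemma rc0 : (0 : R)%:C = 0 :> C. Proof. exact: rmorph0. Qed.
Lemma cjD (x y : C) : conjc (x + y) = conjc x + conjc y. Proof. exact: rmorphD. Qed.
Lemma cjB (x y : C) : conjc (x - y) = conjc x - conjc y. Proof. exact: rmorphB. Qed.
Lemma cjN (x : C) : conjc (- x) = - conjc x. Proof. exact: rmorphN. Qed.
Lemma cjM (x y : C) : conjc (x * y) = conjc x * conjc y. Proof. exact: rmorphM. Qed.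
Lemma cjR (x : R) : conjc (x%:C) = x%:C. Proof. exact: conjc_real. Qed.

Definition n2 (z : C) : R := locked (complex.Re z ^+ 2 + complex.Im z ^+ 2).

Lemma n2E (z : C) : z * conjc z = (n2 z)%:C.
Proof. case: z => a b; apply/eqP; rewrite eq_complex /n2 -lock /=; apply/andP; split; apply/eqP; ring. Qed.

Lemma n2_ge0 (z : C) : 0 <= n2 z.
Proof. rewrite /n2 -lock; nra. Qed.

Lemma n2_eq0 (z : C) : n2 z = 0 -> z = 0.
Proof.
case: z => a b; rewrite /n2 -lock /= => h.
have ha : a = 0 by nra.
have hb : b = 0 by nra.
by rewrite ha hb.
Qed.

Lemma n2N (z : C) : n2 (- z) = n2 z.
Proof. apply: (@complexI R); rewrite -!n2E rmorphN; ring. Qed.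

Lemma n2J (z : C) : n2 (conjc z) = n2 z.
Proof. apply: (@complexI R); rewrite -!n2E conjcK; ring. Qed.

Lemma CS4 (u0 u1 u2 u3 v0 v1 v2 v3 : C) :
  n2 (u0 * v0 + u1 * v1 + u2 * v2 + u3 * v3) <=
  (n2 u0 + n2 u1 + n2 u2 + n2 u3) * (n2 v0 + n2 v1 + n2 v2 + n2 v3).
Proof.
have e : (n2 u0 + n2 u1 + n2 u2 + n2 u3) * (n2 v0 + n2 v1 + n2 v2 + n2 v3)
   - n2 (u0 * v0 + u1 * v1 + u2 * v2 + u3 * v3) =
   n2 (u0 * conjc v1 - u1 * conjc v0) + n2 (u0 * conjc v2 - u2 * conjc v0) + n2 (u0 * conjc v3 - u3 * conjc v0)
   + n2 (u1 * conjc v2 - u2 * conjc v1) + n2 (u1 * conjc v3 - u3 * conjc v1) + n2 (u2 * conjc v3 - u3 * conjc v2).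
  apply: (@complexI R).
  rewrite !(rcD, rcB, rcM, rcN) -!n2E !(cjD, cjB, cjM, cjN) !conjcK.
  ring.
rewrite -subr_ge0 e.
by rewrite !addr_ge0 ?n2_ge0.
Qed.


Section Qlem.
Variables a0 a1 a2 a3 b0 b1 b2 b3 : C.
Definition na := n2 a0 + n2 a1 + n2 a2 + n2 a3.
Definition nb := n2 b0 + n2 b1 + n2 b2 + n2 b3.
Definition wab := conjc a0 * b0 + conjc a1 * b1 + conjc a2 * b2 + conjc a3 * b3.
Definition qd := na * nb - n2 wab.
Definition Qf (z0 z1 : C) := n2 (z0 * a0 + z1 * b0) + n2 (z0 * a1 + z1 * b1)
   + n2 (z0 * a2 + z1 * b2) + n2 (z0 * a3 + z1 * b3).

Lemma Qlem z0 z1 :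
  (n2 z0 + n2 z1) ^+ 2 * qd <= Qf z0 z1 * ((n2 z0 + n2 z1) * (na + nb) - Qf z0 z1).
Proof.
set w0 := - conjc z1; set w1 := conjc z0.
have e1 : (n2 z0 + n2 z1) * (na + nb) - Qf z0 z1 = Qf w0 w1.
  apply: (@complexI R); rewrite /Qf /na /nb /w0 /w1.
  rewrite !(rcD, rcB, rcM, rcN) -!n2E !(cjD, cjB, cjM, cjN) !conjcK.
  ring.
have e2 : Qf z0 z1 * Qf w0 w1 - (n2 z0 + n2 z1) ^+ 2 * qd =
   n2 (conjc (z0 * a0 + z1 * b0) * (w0 * a0 + w1 * b0) + conjc (z0 * a1 + z1 * b1) * (w0 * a1 + w1 * b1)
     + conjc (z0 * a2 + z1 * b2) * (w0 * a2 + w1 * b2) + conjc (z0 * a3 + z1 * b3) * (w0 * a3 + w1 * b3)).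
  apply: (@complexI R); rewrite /Qf /na /nb /w0 /w1 /qd /wab.
  rewrite !(rcD, rcB, rcM, rcN, rcX) -!n2E !(cjD, cjB, cjM, cjN) !conjcK.
  ring.
rewrite e1 -subr_ge0 e2; exact: n2_ge0.
Qed.
End Qlem.

Lemma final_real2 (mu a b q : R) : 4/9 < mu -> mu <= 2 * q -> 0 <= a -> 0 <= b ->
  q <= a * (1 - a) -> q <= b * (1 - b) -> mu <= a * b -> False.
Proof.
move=> h1 h2 ha hb hqa hqb hab.
have ha2 : a < 2/3 by nra.
have hb2 : b < 2/3 by nra.
nra.
Qed.

Lemma final_real (mu n A B q S : R) : 4/9 < mu -> mu <= S -> S <= 2 * q -> 0 < n ->
  0 <= A -> 0 <= B -> (mu * n) ^+ 2 * q <= A * (mu * n - A) -> n ^+ 2 * q <= B * (n - B) ->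
  (mu * n) ^+ 2 <= A * B -> False.
Proof.
move=> hmu hS hq hn hA hB hQA hQB hCS.
have hm : 0 < mu * n by apply: mulr_gt0 => //; lra.
have hm0 : mu * n != 0 by rewrite gt_eqF.
have hn0 : n != 0 by rewrite gt_eqF.
have hmu0 : mu != 0 by apply/eqP => h0; move: hmu; rewrite h0; lra.
apply: (@final_real2 mu (A / (mu * n)) (B / n) q) => //.
- lra.
- by apply: divr_ge0 => //; rewrite ltW.
- by apply: divr_ge0 => //; rewrite ltW.
- have e : A * (mu * n - A) = (mu * n) ^+ 2 * (A / (mu * n) * (1 - A / (mu * n))).
    by field; rewrite ?hn0 ?hmu0.
  rewrite e in hQA; rewrite -(ler_pM2l (exprn_gt0 2 hm)); exact: hQA.
- have e : B * (n - B) = n ^+ 2 * (B / n * (1 - B / n)).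
    by field; rewrite ?hn0 ?hmu0.
  rewrite e in hQB; rewrite -(ler_pM2l (exprn_gt0 2 hn)); exact: hQB.
- have e : A * B = (mu * n) * n * (A / (mu * n) * (B / n)).
    by field; rewrite ?hn0 ?hmu0.
  have e2 : (mu * n) ^+ 2 = (mu * n) * n * mu by ring.
  rewrite e e2 in hCS; rewrite -(ler_pM2l (mulr_gt0 hm hn)); exact: hCS.
Qed.

End N2.


Section Main.
Variable R : rcfType.
Local Notation C := R[i].

Lemma ord4P (P : 'I_(2*2) -> Prop) : P o0 -> P o1 -> P o2 -> P o3 -> forall i, P i.
Proof.
move=> h0 h1 h2 h3 [[|[|[|[|n]]]] h] //.
- by have -> : Ordinal h = o0 by apply: val_inj.
- by have -> : Ordinal h = o1 by apply: val_inj.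
- by have -> : Ordinal h = o2 by apply: val_inj.
- by have -> : Ordinal h = o3 by apply: val_inj.
Qed.

Lemma ord3P (P : 'I_3 -> Prop) : P k0 -> P k1 -> P k2 -> forall i, P i.
Proof.
move=> h0 h1 h2 [[|[|[|n]]] h] //.
- by have -> : Ordinal h = k0 by apply: val_inj.
- by have -> : Ordinal h = k1 by apply: val_inj.
- by have -> : Ordinal h = k2 by apply: val_inj.
Qed.

Definition ymn (i j : nat) : C :=
  match i, j with
  | 0, 3 => -1 | 1, 2 => 1 | 2, 1 => 1 | 3, 0 => -1 | _, _ => 0 end.

Lemma Ym_entries i j : Ym R i j = ymn i j.
Proof.
move: i j; apply: ord4P; apply: ord4P; rewrite YmE ?unI0 ?unI1 ?unI2 ?unI3;
  cbn [fst snd nat_of_ord t0 t1 k0 k1 k2 o0 o1 o2 o3 pv ymn]; ring: (ii2 R).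
Qed.

Lemma YmT : (Ym R)^T = Ym R.
Proof.
apply/matrixP => i j; rewrite mxE !Ym_entries.
by move: i j; apply: ord4P; apply: ord4P.
Qed.

Lemma YmJ : map_mx conjc (Ym R) = Ym R.
Proof.
apply/matrixP => i j; rewrite mxE !Ym_entries.
move: i j; apply: ord4P; apply: ord4P;
  cbn [nat_of_ord o0 o1 o2 o3 ymn]; rewrite ?cjN ?conjc0 ?conjc1 //.
Qed.

Lemma YdefE : pauli R 1 *t pauli R 1 = Ym R.
Proof. by rewrite /Ym -lock; congr (pauli R _ *t pauli R _); apply: val_inj. Qed.


Variable psi : qstate3 R.
Variable k : 'I_3.

Definition V : 'M[C]_(2*2, 2) :=
  locked (\matrix_(i, z) amp psi k z (mxtens_unindex i).1 (mxtens_unindex i).2).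
Definition Vc : 'M[C]_(2*2, 2) := map_mx conjc V.

Lemma VE i z : V i z = amp psi k z (mxtens_unindex i).1 (mxtens_unindex i).2.
Proof. by rewrite /V -lock mxE. Qed.

Local Notation rho := (reduced psi k).

Lemma rhoE : rho = V *m Vc^T.
Proof. apply/matrixP => i j; rewrite !mxE; apply: eq_bigr => z _; rewrite !mxE !VE. by []. Qed.

Lemma rho_conj : map_mx conjc rho = rho^T.
Proof.
apply/matrixP => i j; rewrite !mxE rmorph_sum; apply: eq_bigr => z _.
by rewrite rmorphM /= conjcK mulrC.
Qed.

Lemma rhoTE : rho^T = Vc *m V^T.
Proof. by rewrite rhoE trmx_mul trmxK. Qed.

Lemma woottersE : wootters_mx rho = V *m Vc^T *m Ym R *m (Vc *m V^T) *m Ym R.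
Proof. by rewrite /wootters_mx YdefE rho_conj rhoTE rhoE. Qed.

Definition G : 'M[C]_2 := locked (V^T *m Ym R *m V).
Definition Gc : 'M[C]_2 := locked (Vc^T *m Ym R *m Vc).

Lemma GcE z w : Gc z w = conjc (G z w).
Proof.
have -> : Gc = map_mx conjc G.
  by rewrite /Gc /G -!lock !map_mxM map_trmx YmJ.
by rewrite mxE.
Qed.

Lemma GE z w : G z w = - V o0 z * V o3 w + V o1 z * V o2 w + V o2 z * V o1 w - V o3 z * V o0 w.
Proof.
rewrite /G -lock !mxE sum4; rewrite !mxE !sum4 !mxE !Ym_entries.
cbn [nat_of_ord o0 o1 o2 o3 ymn]; ring.
Qed.

Lemma Gsym : G t1 t0 = G t0 t1.
Proof. rewrite !GE; ring. Qed.

Notation a0 := (V o0 t0). Notation a1 := (V o1 t0). Notation a2 := (V o2 t0). Notation a3 := (V o3 t0).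
Notation b0 := (V o0 t1). Notation b1 := (V o1 t1). Notation b2 := (V o2 t1). Notation b3 := (V o3 t1).

Lemma tr_rho : \tr rho = (na a0 a1 a2 a3 + nb b0 b1 b2 b3)%:C.
Proof.
rewrite rhoE /mxtrace sum4 !mxE !sum2 !mxE /na /nb !rcD -!n2E; ring.
Qed.

Lemma tr_rho2 : \tr (rho *m rho) =
  ((na a0 a1 a2 a3 + nb b0 b1 b2 b3) ^+ 2 - 2 * qd a0 a1 a2 a3 b0 b1 b2 b3)%:C.
Proof.
rewrite rhoE /mxtrace sum4 !mxE !sum4 !mxE !sum2 !mxE.
rewrite /qd /na /nb /wab !(rcD, rcB, rcM, rcN, rcX) -!n2E !(cjD, cjB, cjM, cjN) !conjcK.
ring.
Qed.

Lemma norm_V : normalized psi -> na a0 a1 a2 a3 + nb b0 b1 b2 b3 = 1.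
Proof.
rewrite /normalized !sum2 => hN.
apply: (@complexI R); rewrite rc1 -hN /na /nb !rcD -!n2E !VE !unI0 !unI1 !unI2 !unI3.
cbn [fst snd].
move: k; apply: ord3P; rewrite /amp; cbn [nat_of_ord k0 k1 k2 eq_op]; simpl; ring.
Qed.

Lemma n2R (x : R) : n2 (x%:C) = x ^+ 2.
Proof. apply: (@complexI R); rewrite -n2E cjR rcX; ring. Qed.

Lemma main_k : normalized psi ->
  (exists c : R, is_concurrence rho c /\ 4 / 9 < c ^+ 2) -> 1 < Ssum rho.
Proof.
move=> hN [c [[lam [hl0 [hlo [hcp hc]]]] hc2]].
set Sm := \sum_(i < 4) lam i ^+ 2.
set f := fun i : 'I_4 => ((lam i ^+ 2)%:C : C).
have hprod : \prod_(i < 4) ('X - (f i)%:P) = \prod_(p <- map f (enum 'I_4)) ('X - p%:P).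
  by rewrite big_map big_enum.
have hsz : size (map f (enum 'I_4)) = 4%N by rewrite size_map size_enum_ord.
have trM : \tr (wootters_mx rho) = Sm%:C.
  have h := char_poly_trace (wootters_mx rho) (isT : (0 < 2 * 2)%N).
  rewrite hcp -/f hprod in h.
  have h2 := coefPn_prod_XsubC (ps := map f (enum 'I_4)) ltac:(by rewrite hsz).
  rewrite hsz in h2.
  have e := etrans (esym h) h2.
  move/oppr_inj: e => ->; rewrite big_map big_enum /= /Sm rmorph_sum; by [].
have hSm : Sm = lam 0 ^+ 2 + lam 1 ^+ 2 + lam 2 ^+ 2 + lam 3 ^+ 2.
  rewrite /Sm (@big_ord_recr _ _ _ 3) (@big_ord_recr _ _ _ 2) (@big_ord_recr _ _ _ 1) (@big_ord_recr _ _ _ 0) big_ord0 /= add0r.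
  by congr (lam _ ^+ 2 + lam _ ^+ 2 + lam _ ^+ 2 + lam _ ^+ 2); apply: val_inj.
have hc0 : 0 <= c by rewrite hc le_max lexx.
have hcl : c <= lam 0.
  rewrite hc ge_max hl0 /=.
  have := hl0 1; have := hl0 2; have := hl0 3; lra.
have hmu : 4 / 9 < lam 0 ^+ 2 by nra.
have hSmu : lam 0 ^+ 2 <= Sm.
  rewrite hSm; have := sqr_ge0 (lam 1); have := sqr_ge0 (lam 2); have := sqr_ge0 (lam 3); lra.
have hroot : root (char_poly (wootters_mx rho)) (f 0).
  by rewrite hcp -/f hprod root_prod_XsubC; apply: map_f; rewrite mem_enum.
move: hroot; rewrite -eigenvalue_root_char => /eigenvalueP [x hx xnz].
rewrite woottersE in hx.
set y := x *m V.
have hy : y *m Gc *m G = f 0 *: y.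
  have := congr1 (mulmx^~ V) hx; rewrite -scalemxAl /y /G /Gc -!lock !mulmxA => <-.
  by [].
have f0nz : f 0 != 0.
  rewrite /f; apply/eqP => /(congr1 (@complex.Re R)) /= h0; move: hmu; rewrite h0; lra.
have ynz : y != 0.
  apply/eqP => y0; move/eqP: xnz; apply.
  have : f 0 *: x = 0 by rewrite -hx !mulmxA -/y y0 !mul0mx.
  by move/eqP; rewrite scalemx_eq0 (negbTE f0nz) /= => /eqP.
clearbody y.
have f0E : f 0 = (lam 0 ^+ 2)%:C by [].
have E0 : (y 0 t0 * conjc (G t0 t0) + y 0 t1 * conjc (G t1 t0)) * G t0 t0
        + (y 0 t0 * conjc (G t0 t1) + y 0 t1 * conjc (G t1 t1)) * G t1 t0 = f 0 * y 0 t0.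
  have h : (y *m Gc *m G) 0 t0 = (f 0 *: y) 0 t0 by rewrite hy.
  by rewrite !mxE !sum2 !mxE !sum2 !GcE in h.
have E1 : (y 0 t0 * conjc (G t0 t0) + y 0 t1 * conjc (G t1 t0)) * G t0 t1
        + (y 0 t0 * conjc (G t0 t1) + y 0 t1 * conjc (G t1 t1)) * G t1 t1 = f 0 * y 0 t1.
  have h : (y *m Gc *m G) 0 t1 = (f 0 *: y) 0 t1 by rewrite hy.
  by rewrite !mxE !sum2 !mxE !sum2 !GcE in h.
rewrite f0E in E0 E1.
set y0 := y 0 t0 in E0 E1; set y1 := y 0 t1 in E0 E1.
set al0 := y0 * conjc (G t0 t0) + y1 * conjc (G t1 t0) in E0 E1.
set al1 := y0 * conjc (G t0 t1) + y1 * conjc (G t1 t1) in E0 E1.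
set n := n2 y0 + n2 y1.
have hn : 0 < n.
  rewrite lt_def addr_ge0 ?n2_ge0 // andbT; apply/eqP => n0.
  have h0 : n2 y0 = 0 by have := n2_ge0 y0; have := n2_ge0 y1; rewrite /n in n0; lra.
  have h1 : n2 y1 = 0 by have := n2_ge0 y0; have := n2_ge0 y1; rewrite /n in n0; lra.
  move/eqP: ynz; apply; apply/matrixP => i j; rewrite (ord1 i) mxE.
  case: j => [[|[|j]] hj] //.
  - have -> : Ordinal hj = t0 by apply: val_inj.
    exact: n2_eq0 h0.
  - have -> : Ordinal hj = t1 by apply: val_inj.
    exact: n2_eq0 h1.
rewrite Gsym in E0.
have hal0 : conjc al0 = conjc y0 * G t0 t0 + conjc y1 * G t0 t1.
  by rewrite /al0 !(cjD, cjM) !conjcK Gsym.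
have hal1 : conjc al1 = conjc y0 * G t0 t1 + conjc y1 * G t1 t1.
  by rewrite /al1 !(cjD, cjM) !conjcK.
have c1 : n2 al0 + n2 al1 = lam 0 ^+ 2 * n.
  apply: (@complexI R); rewrite /n !(rcD, rcM) -!n2E hal0 hal1.
  apply/eqP; rewrite -subr_eq0; apply/eqP.
  transitivity (conjc y0 * (al0 * G t0 t0 + al1 * G t0 t1 - (lam 0 ^+ 2)%:C * y0)
              + conjc y1 * (al0 * G t0 t1 + al1 * G t1 t1 - (lam 0 ^+ 2)%:C * y1)).
    ring.
  by rewrite E0 E1 !subrr !mulr0 addr0.
set u0 := al0 * a0 + al1 * b0. set u1 := al0 * a1 + al1 * b1.
set u2 := al0 * a2 + al1 * b2. set u3 := al0 * a3 + al1 * b3.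
set w0 := conjc y0 * a0 + conjc y1 * b0. set w1 := conjc y0 * a1 + conjc y1 * b1.
set w2 := conjc y0 * a2 + conjc y1 * b2. set w3 := conjc y0 * a3 + conjc y1 * b3.
have hs : u0 * (- w3) + u1 * w2 + u2 * w1 + u3 * (- w0) = (lam 0 ^+ 2 * n)%:C.
  rewrite /n !(rcD, rcM) -!n2E.
  move: E0 E1; rewrite !GE => E0 E1.
  apply/eqP; rewrite -subr_eq0; apply/eqP.
  transitivity (conjc y0 * (al0 * (- a0 * a3 + a1 * a2 + a2 * a1 - a3 * a0)
                   + al1 * (- a0 * b3 + a1 * b2 + a2 * b1 - a3 * b0) - (lam 0 ^+ 2)%:C * y0)
              + conjc y1 * (al0 * (- a0 * b3 + a1 * b2 + a2 * b1 - a3 * b0)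
                   + al1 * (- b0 * b3 + b1 * b2 + b2 * b1 - b3 * b0) - (lam 0 ^+ 2)%:C * y1)).
    rewrite /u0 /u1 /u2 /u3 /w0 /w1 /w2 /w3; ring.
  by rewrite E0 E1 !subrr !mulr0 addr0.
have hCS := CS4 u0 u1 u2 u3 (- w3) w2 w1 (- w0).
rewrite hs n2R !n2N in hCS.
set A := n2 u0 + n2 u1 + n2 u2 + n2 u3 in hCS.
set B := n2 w3 + n2 w2 + n2 w1 + n2 w0 in hCS.
have hA0 : 0 <= A by rewrite /A !addr_ge0 ?n2_ge0.
have hB0 : 0 <= B by rewrite /B !addr_ge0 ?n2_ge0.
have hQA := Qlem a0 a1 a2 a3 b0 b1 b2 b3 al0 al1.
have eA : Qf a0 a1 a2 a3 b0 b1 b2 b3 al0 al1 = A by [].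
rewrite eA c1 (norm_V hN) mulr1 in hQA.
have hQB := Qlem a0 a1 a2 a3 b0 b1 b2 b3 (conjc y0) (conjc y1).
have eB : Qf a0 a1 a2 a3 b0 b1 b2 b3 (conjc y0) (conjc y1) = B.
  by rewrite /Qf /B -/w0 -/w1 -/w2 -/w3; lra.
rewrite eB !n2J -/n (norm_V hN) mulr1 in hQB.
have hSs : Ssum rho = (1 - 4 * qd a0 a1 a2 a3 b0 b1 b2 b3 + 2 * Sm)%:C.
  rewrite Ssum_id tr_rho2 tr_rho (norm_V hN).
  have -> : \tr (rho *m Ym R *m rho^T *m Ym R) = Sm%:C.
    by rewrite -trM /wootters_mx YdefE rho_conj.
  rewrite !(rcD, rcB, rcM, rcN, rcX) rc1; ring.
rewrite hSs -rc1 ltcR ltNge; apply/negP => hle.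
apply: (@final_real R (lam 0 ^+ 2) n A B (qd a0 a1 a2 a3 b0 b1 b2 b3) Sm) => //.
lra.
Qed.

End Main.

End Helpers.
Import Helpers.
Unset Implicit Arguments. Set Strict Implicit. Set Printing Implicit Defensive.

(* Pairs {i,j} of qubits are identified with the traced-out qubit k;
   two distinct pairs = two distinct k1 <> k2. *)
Theorem corollary5 (R : rcfType) (psi : qstate3 R) (k1 k2 : 'I_3) :
  normalized psi -> k1 <> k2 ->
  (exists c : R, is_concurrence (reduced psi k1) c /\ 4 / 9 < c ^+ 2) ->
  (exists c : R, is_concurrence (reduced psi k2) c /\ 4 / 9 < c ^+ 2) ->
  1 < Ssum (reduced psi k1) /\ 1 < Ssum (reduced psi k2).
Proof.
move=> hN _ h1 h2; split; [exact: (main_k hN h1) | exact: (main_k hN h2)].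
Qed.
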